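(* For a commutative ring $R$ the following are equivalent: (i) $R$ is a GPP-ring; (ii) $R$ is a GPF-ring and $T(R)$ is zero-dimensional; (iii) $T(R)$ is zero-dimensional and for every multiplicative subset $S\subseteq R$ and every idempotent $x\in S^{-1}R$ there is an idempotent $e\in R$ with $e/1=x$; (iv) $T(R)$ is zero-dimensional and for every idempotent $x\in T(R)$ there is an idempotent $e\in R$ with $e/1=x$.
   Context: A commutative ring $A$ is a GPP-ring (resp. GPF-ring) if for each $f\in A$ there exists $n\geq 1$ such that $Af^n$ is a projective (resp. flat) $A$-module. $T(R)$ denotes the total ring of fractions of $R$ (localization at the set of non-zero-divisors). Zero-dimensional means Krull dimension $0$. *)

(* Defs.v *)
From HB Require Import structures.
From mathcomp Require Import all_boot all_order all_algebra.
Set Implicit Arguments. Unset Strict Implicit. Unset Printing Implicit Defensive.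
Import GRing.Theory.
Local Open Scope ring_scope.

Section Defs.
Variable R : comPzRingType.

Definition princ_pow (f : R) (n : nat) (x : R) : Prop := exists a : R, x = a * f ^+ n.

(* An R-linear map from the submodule I of R (given by a predicate) into M:
   only its values on I matter. *)
Definition hom_on (I : R -> Prop) (M : lmodType R) (phi : R -> M) : Prop :=
  (forall x y, I x -> I y -> phi (x + y) = phi x + phi y) /\
  (forall a x, I x -> phi (a * x) = a *: phi x).

Definition projective_ideal (I : R -> Prop) : Prop :=
  forall (M N : lmodType R) (g : {linear M -> N}),
    (forall y : N, exists x : M, g x = y) ->
    forall phi : R -> N, hom_on I phi ->
    exists psi : R -> M, hom_on I psi /\ forall x, I x -> g (psi x) = phi x.

(* Flatness of the submodule I of R, via the equational criterion
   (Bourbaki / Lazard; definition used e.g. by Lombardi-Quitte):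
   every relation in I is trivial. *)
Definition flat_ideal (I : R -> Prop) : Prop :=
  forall (r : nat) (a x : 'I_r -> R),
    (forall i, I (x i)) -> \sum_(i < r) a i * x i = 0 ->
    exists (s : nat) (y : 'I_s -> R) (b : 'I_r -> 'I_s -> R),
      (forall j, I (y j)) /\
      (forall i, x i = \sum_(j < s) b i j * y j) /\
      (forall j, \sum_(i < r) a i * b i j = 0).

Definition GPP_ring : Prop :=
  forall f : R, exists n : nat, (1 <= n)%N /\ projective_ideal (princ_pow f n).

Definition GPF_ring : Prop :=
  forall f : R, exists n : nat, (1 <= n)%N /\ flat_ideal (princ_pow f n).

Definition mult_subset (S : R -> Prop) : Prop :=
  S 1 /\ forall a b, S a -> S b -> S (a * b).

Definition nzd (s : R) : Prop := forall x : R, s * x = 0 -> x = 0.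

(* ---- The localization S^{-1}R, presented by fractions (r, s) with s in S ---- *)
Definition frac := (R * R)%type.
Definition valid (S : R -> Prop) (p : frac) : Prop := S p.2.
Definition loc_eq (S : R -> Prop) (p q : frac) : Prop :=
  exists u, S u /\ u * (p.1 * q.2 - q.1 * p.2) = 0.
Definition fadd (p q : frac) : frac := (p.1 * q.2 + q.1 * p.2, p.2 * q.2).
Definition fmul (p q : frac) : frac := (p.1 * q.1, p.2 * q.2).
Definition fone : frac := (1, 1).
Definition fzero : frac := (0, 1).
Definition fcan (r : R) : frac := (r, 1).

Definition loc_idem (S : R -> Prop) (p : frac) : Prop := loc_eq S (fmul p p) p.

(* Ideals of S^{-1}R, described as (well-defined) predicates on fractions. *)
Definition loc_ideal (S : R -> Prop) (I : frac -> Prop) : Prop :=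
  (forall p q, valid S p -> valid S q -> loc_eq S p q -> I p -> I q) /\
  I fzero /\
  (forall p q, valid S p -> valid S q -> I p -> I q -> I (fadd p q)) /\
  (forall p q, valid S p -> valid S q -> I q -> I (fmul p q)).

Definition loc_prime (S : R -> Prop) (P : frac -> Prop) : Prop :=
  loc_ideal S P /\ ~ P fone /\
  forall p q, valid S p -> valid S q -> P (fmul p q) -> P p \/ P q.

Definition loc_maximal (S : R -> Prop) (P : frac -> Prop) : Prop :=
  loc_ideal S P /\ ~ P fone /\
  forall J, loc_ideal S J -> (forall p, valid S p -> P p -> J p) ->
    J fone \/ (forall p, valid S p -> J p -> P p).

Definition loc_zero_dim (S : R -> Prop) : Prop :=
  forall P, loc_prime S P -> loc_maximal S P.

Definition idem_lift (S : R -> Prop) : Prop :=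
  forall p, valid S p -> loc_idem S p ->
    exists e : R, e * e = e /\ loc_eq S (fcan e) p.

End Defs.

(* Main.v *)
Require Import Defs.
From HB Require Import structures.
From mathcomp Require Import all_boot all_order all_algebra ring.
From mathcomp Require Import boolp classical_sets.
Require Import Defs.
Set Implicit Arguments. Unset Strict Implicit. Unset Printing Implicit Defensive.
Import GRing.Theory.
Local Open Scope ring_scope.

Section Img.
Variables (R : comPzRingType) (c : R).
Definition inI (x : R) : bool := `[< exists a, x = a * c >].
Record img := Img { ival : R; ivalP : inI ival }.
HB.instance Definition _ := [isSub for ival].
HB.instance Definition _ := [Choice of img by <:].

Lemma inI0 : inI 0. Proof. by apply/asboolP; exists 0; rewrite mul0r. Qed.
Lemma inID x y : inI x -> inI y -> inI (x + y).
Proof. by move=> /asboolP[a ->] /asboolP[b ->]; apply/asboolP; exists (a + b); rewrite mulrDl. Qed.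
Lemma inIN x : inI x -> inI (- x).
Proof. by move=> /asboolP[a ->]; apply/asboolP; exists (- a); rewrite mulNr. Qed.
Lemma inIM a x : inI x -> inI (a * x).
Proof. by move=> /asboolP[b ->]; apply/asboolP; exists (a * b); rewrite mulrA. Qed.

Definition izero := Img inI0.
Definition iadd (x y : img) := Img (inID (ivalP x) (ivalP y)).
Definition iopp (x : img) := Img (inIN (ivalP x)).
Definition iscale (a : R) (x : img) := Img (inIM a (ivalP x)).

Lemma iaddA : associative iadd.
Proof. by move=> x y z; apply: val_inj; rewrite /= addrA. Qed.
Lemma iaddC : commutative iadd.
Proof. by move=> x y; apply: val_inj; rewrite /= addrC. Qed.
Lemma iadd0 : left_id izero iadd.
Proof. by move=> x; apply: val_inj; rewrite /= add0r. Qed.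
Lemma iaddN : left_inverse izero iopp iadd.
Proof. by move=> x; apply: val_inj; rewrite /= addNr. Qed.
HB.instance Definition _ := GRing.isZmodule.Build img iaddA iaddC iadd0 iaddN.
Lemma iscaleA a b v : iscale a (iscale b v) = iscale (a * b) v.
Proof. by apply: val_inj; rewrite /= mulrA. Qed.
Lemma iscale1 : left_id 1 iscale.
Proof. by move=> x; apply: val_inj; rewrite /= mul1r. Qed.
Lemma iscaleDr : right_distributive iscale +%R.
Proof. by move=> a x y; apply: val_inj; rewrite /= mulrDr. Qed.
Lemma iscaleDl v : {morph iscale^~ v: a b / a + b}.
Proof. by move=> a b; apply: val_inj; rewrite /= mulrDl. Qed.
HB.instance Definition _ := GRing.Zmodule_isLmodule.Build R img iscaleA iscale1 iscaleDr iscaleDl.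

Lemma inIc a : inI (a * c). Proof. by apply/asboolP; exists a. Qed.
Definition gmul (a : R^o) : img := Img (inIc a).
Lemma gmul_lin : linear gmul.
Proof. by move=> a x y; apply: val_inj; rewrite /= mulrDl mulrA. Qed.
HB.instance Definition _ := GRing.isLinear.Build R R^o img *:%R gmul gmul_lin.
Lemma ival_add (x y : img) : val (x + y) = ival x + ival y. Proof. by []. Qed.
Lemma ival_scale a (x : img) : val (a *: x) = a * ival x. Proof. by []. Qed.
End Img.

Lemma proj_ann (R : comPzRingType) (c : R) :
  projective_ideal (fun x => exists a, x = a * c) ->
  exists e : R, e * e = e /\ e * c = 0 /\ forall a, a * c = 0 -> a * e = a.
Proof.
move=> H.
have gsurj : forall y : img c, exists x : R^o, gmul c x = y.
  by move=> [y yP]; case/asboolP: (yP) => a ya; exists a; apply: val_inj; rewrite /= ya.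
pose phi (x : R) : img c := insubd (izero c) x.
have phiE x : (exists a, x = a * c) -> val (phi x) = x.
  by move=> hx; rewrite /phi val_insubd /inI (asboolT hx).
have [|psi [[psiD psiZ] gpsi]] := H (R^o) (img c) (gmul c) gsurj phi.
  split.
  - move=> x y hx hy; apply: val_inj; rewrite ival_add !phiE //.
    by case: hx hy => [a ->] [b ->]; exists (a + b); rewrite mulrDl.
  - move=> a x hx; apply: val_inj; rewrite ival_scale !phiE //.
    by case: hx => [b ->]; exists (a * b); rewrite mulrA.
have hc : exists a, c = a * c by exists 1; rewrite mul1r.
set d : R := psi c.
have dc : d * c = c.
  by have := congr1 val (gpsi c hc); rewrite phiE.
have h0 : psi 0 = 0 by have := psiZ 0 c hc; rewrite mul0r scale0r.
have annd a : a * c = 0 -> a * d = 0.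
  by move=> ac; have := psiZ a c hc; rewrite ac h0 => /esym.
exists (1 - d); split; last split.
- have : (1 - d) * d = 0 by apply: annd; rewrite mulrBl mul1r dc subrr.
  by rewrite mulrBr mulr1 mulrBl mul1r => ->; rewrite subr0.
- by rewrite mulrBl mul1r dc subrr.
- by move=> a ac; rewrite mulrBr mulr1 annd // subr0.
Qed.
Lemma ann_proj (R : comPzRingType) (c e : R) :
  e * c = 0 -> (forall a, a * c = 0 -> a * e = a) ->
  projective_ideal (fun x => exists a, x = a * c).
Proof.
move=> ec ann M N g gs phi [phiD phiZ].
have [m gm] := gs (phi c).
pose psi (x : R) : M := if pselect (exists a, x = a * c) is left h
  then (sval (cid h) * (1 - e)) *: m else 0.
have wd a b : a * c = b * c -> a * (1 - e) = b * (1 - e).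
  move=> h; apply/eqP; rewrite -subr_eq0 -mulrBl.
  have /ann : (a - b) * c = 0 by rewrite mulrBl h subrr.
  by rewrite mulrBr mulr1 => ->; rewrite subrr.
have psiE a : psi (a * c) = (a * (1 - e)) *: m.
  rewrite /psi; case: pselect => [h|[]]; last by exists a.
  by case: (cid h) => b /= hb; rewrite (wd b a).
have hc : exists a, c = a * c by exists 1; rewrite mul1r.
exists psi; split; first split.
- move=> x y [a ->] [b ->]; by rewrite -mulrDl !psiE mulrDl scalerDl.
- by move=> r x [a ->]; rewrite mulrA !psiE scalerA mulrA.
- move=> x [a ->]; rewrite psiE linearZ /= gm -phiZ //.
  by rewrite -mulrA mulrBl mul1r ec subr0.
Qed.
Section Alg.
Variable R : comPzRingType.

Lemma nzdM (s t : R) : nzd s -> nzd t -> nzd (s * t).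
Proof. by move=> hs ht x; rewrite -mulrA => /hs /ht. Qed.
Lemma nzd1 : nzd (1 : R).
Proof. by move=> x; rewrite mul1r. Qed.
Lemma nzdX (s : R) n : nzd s -> nzd (s ^+ n).
Proof. by move=> hs; elim: n => [|n IH]; [rewrite expr0; exact: nzd1 | rewrite exprS; exact: nzdM]. Qed.

Lemma locT (p q : frac R) : loc_eq (@nzd R) p q <-> p.1 * q.2 = q.1 * p.2.
Proof.
split.
- by move=> [u [hu /hu /eqP]]; rewrite subr_eq0 => /eqP.
- by move=> h; exists 1; split; [exact: nzd1 | rewrite h subrr mulr0].
Qed.

Definition pireg := forall a : R, exists n c t, nzd t /\ t * a ^+ n = c * a ^+ n.+1.

Lemma pireg_zd : pireg -> loc_zero_dim (@nzd R).
Proof.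
move=> H P [[Pwd [P0 [Padd Pmul]]] [P1 Pprime]].
split; first by split.
split => // J [Jwd [J0 [Jadd Jmul]]] PJ.
case: (pselect (forall p, valid (@nzd R) p -> J p -> P p)) => [h|hn]; [by right|left].
have [q [qv [Jq nPq]]] : exists q, valid (@nzd R) q /\ J q /\ ~ P q.
  apply: contrapT => hh; apply: hn => p pv Jp.
  by apply: contrapT => nP; apply: hh; exists p.
case: q qv Jq nPq => a s /= qv Jq nPq; rewrite /valid /= in qv.
have [n [c [t [tn e]]]] := H a.
have PX : forall k, P (a ^+ k, s ^+ k) -> P (a, s).
  elim=> [|k IH]; first by rewrite !expr0.
  rewrite !exprS => hP.
  have [] := Pprime (a, s) (a ^+ k, s ^+ k) qv (nzdX (n:=k) qv) hP => // /IH //.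
have vY : valid (@nzd R) (t - a * c, t) by [].
have PXY : P (fmul (a ^+ n, s ^+ n) (t - a * c, t)).
  apply: (Pwd (fzero R)) => //; first exact: nzd1.
    by rewrite /valid /=; apply: nzdM => //; apply: nzdX.
  apply/locT => /=.
  have -> : a ^+ n * (t - a * c) = t * a ^+ n - c * a ^+ n.+1 by rewrite exprS; ring.
  by rewrite e subrr mul0r mulr1.
have [/PX //|PY] := Pprime (a ^+ n, s ^+ n) (t - a * c, t) (nzdX (n:=n) qv) vY PXY.
have JY := PJ _ vY PY.
have vZ : valid (@nzd R) (c * s, t) by [].
have JZ := Jmul (c * s, t) (a, s) vZ qv Jq.
have vW : valid (@nzd R) (fmul (c * s, t) (a, s)) by apply: nzdM.
have JS := Jadd _ _ vY vW JY JZ.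
apply: (Jwd _ _ _ _ _ JS).
- by rewrite /valid /=; apply: nzdM => //; apply: nzdM.
- exact: nzd1.
- by apply/locT => /=; ring.
Qed.


Lemma zd_pireg : loc_zero_dim (@nzd R) -> pireg.
Proof.
move=> ZD a; apply: contrapT => npi.
pose Sig (x : R) := exists n c t, nzd t /\ x = a ^+ n * (t - a * c).
have Sig0 : ~ Sig 0.
  move=> [n [c [t [tn e]]]]; apply: npi; exists n, c, t; split => //.
  by apply/eqP; rewrite -subr_eq0; apply/eqP; rewrite e exprS; ring.
have SigM x y : Sig x -> Sig y -> Sig (x * y).
  move=> [n [c [t [tn ->]]]] [m [d [u [un ->]]]].
  exists (n + m)%N, (c * u + t * d - a * c * d), (t * u); split; first exact: nzdM.
  by rewrite exprD; ring.
have Sig1 : Sig 1 by exists 0%N, 0, 1; split; [exact: nzd1| rewrite expr0; ring].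
have Siga : Sig a by exists 1%N, 0, 1; split; [exact: nzd1| rewrite expr1; ring].
pose Pset (A : set R) := [/\ (forall x y, A x -> A y -> A (x + y)),
   (forall r x, A x -> A (r * x)), (forall t x, nzd t -> A (t * x) -> A x)
   & (forall x, A x -> ~ Sig x)].
have [Q [[QD QM Qsat QS] Qmax]] : exists Q, Pset Q /\ forall B, proper Q B -> ~ Pset B.
  apply: Zorn_bigcup => F FP Ftot; split.
  - move=> x y [X FX Xx] [Y FY Yy].
    have [XY|YX] := Ftot X Y FX FY.
    + by exists Y => //; have [D _ _ _] := FP Y FY; apply: D => //; apply: XY.
    + by exists X => //; have [D _ _ _] := FP X FX; apply: D => //; apply: YX.
  - by move=> r x [X FX Xx]; exists X => //; have [_ M _ _] := FP X FX; apply: M.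
  - by move=> t x tn [X FX Xx]; exists X => //; have [_ _ S _] := FP X FX; apply: S tn _.
  - by move=> x [X FX Xx]; have [_ _ _ S] := FP X FX; apply: S.
have Q0 : Q 0.
  apply: contrapT => nQ0.
  apply: (Qmax (fun z => z = 0)).
    split; first by move=> z Qz; exfalso; apply: nQ0; rewrite -(mul0r z); apply: (QM).
    by move=> h; apply: nQ0; apply: h.
  split.
  - by move=> x y -> ->; rewrite addr0.
  - by move=> r x ->; rewrite mulr0.
  - by move=> t x tn; apply: tn.
  - by move=> x ->.
pose B (x : R) (z : R) := exists t r q, [/\ nzd t, Q q & t * z = q + x * r].
have PB x : (forall z, B x z -> ~ Sig z) -> Pset (B x).
  move=> hS; split => //.
  - move=> z1 z2 [t1 [r1 [q1 [t1n Qq1 e1]]]] [t2 [r2 [q2 [t2n Qq2 e2]]]].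
    exists (t1 * t2), (t2 * r1 + t1 * r2), (t2 * q1 + t1 * q2); split.
    + exact: nzdM.
    + by apply: (QD); apply: (QM).
    + have -> : t1 * t2 * (z1 + z2) = t2 * (t1 * z1) + t1 * (t2 * z2) by ring.
      by rewrite e1 e2; ring.
  - move=> r z [t [r1 [q [tn Qq e]]]]; exists t, (r * r1), (r * q); split => //.
    + exact: (QM).
    + by rewrite mulrCA e; ring.
  - move=> t z tn [t1 [r1 [q [t1n Qq e]]]]; exists (t1 * t), r1, q; split => //.
    + exact: nzdM.
    + by rewrite -mulrA.
have QB x z : Q z -> B x z by move=> Qz; exists 1, 0, z; split => //; [exact: nzd1| ring].
have BS x : ~ Q x -> exists z, B x z /\ Sig z.
  move=> nQx; apply: contrapT => hn.
  apply: (Qmax (B x)); last first.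
    apply: PB => z Bz Sz; apply: hn; by exists z.
  split; first by move=> z; apply: QB.
  move=> h; apply: nQx; apply: h; exists 1, 1, 0; split => //; [exact: nzd1| ring].
have Qprime x y : Q (x * y) -> Q x \/ Q y.
  move=> Qxy; apply: contrapT => hn.
  have nQx : ~ Q x by move=> h; apply: hn; left.
  have nQy : ~ Q y by move=> h; apply: hn; right.
  have [z1 [[t1 [r1 [q1 [t1n Qq1 e1]]]] S1]] := BS x nQx.
  have [z2 [[t2 [r2 [q2 [t2n Qq2 e2]]]] S2]] := BS y nQy.
  apply: (QS (z1 * z2)); last exact: SigM.
  apply: (Qsat (t1 * t2)); first exact: nzdM.
  have -> : t1 * t2 * (z1 * z2) = (t1 * z1) * (t2 * z2) by ring.
  rewrite e1 e2.
  have -> : (q1 + x * r1) * (q2 + y * r2) = q1 * (q2 + y * r2) + q2 * (x * r1) + (r1 * r2) * (x * y) by ring.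
  apply: (QD); last exact: (QM).
  by apply: (QD); rewrite mulrC; apply: (QM).
have nQ1 : ~ Q 1 by move=> h; apply: (QS 1).
pose P (p : frac R) := Q p.1.
have Pideal : loc_ideal (@nzd R) P.
  split; last split; last split.
  - move=> p q pv qv /locT e Pp; rewrite /P in Pp *.
    apply: (Qsat p.2) => //; rewrite mulrC -e mulrC; exact: (QM).
  - exact: Q0.
  - move=> p q pv qv Pp Pq; rewrite /P /=; apply: (QD); rewrite mulrC; exact: (QM).
  - move=> p q pv qv Pq; rewrite /P /=; exact: (QM).
have Pprime : loc_prime (@nzd R) P.
  split => //; split => //.
  by move=> p q _ _ /Qprime.
have [_ [_ Pmax]] := ZD P Pprime.
pose J (p : frac R) := exists t r, nzd t /\ Q (t * p.1 - a * r).
have Jideal : loc_ideal (@nzd R) J.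
  split; last split; last split.
  - move=> p q pv qv /locT e [t [r [tn Qt]]].
    exists (t * p.2), (r * q.2); split; first exact: nzdM.
    have -> : t * p.2 * q.1 - a * (r * q.2) = q.2 * (t * p.1 - a * r).
      have h2 : q.2 * (t * p.1 - a * r) = t * (p.1 * q.2) - a * (r * q.2) by ring.
      by rewrite h2 e; ring.
    exact: (QM).
  - by exists 1, 0; split; [exact: nzd1| rewrite /= mulr0 mulr0 subrr].
  - move=> p q pv qv [t [r [tn Qt]]] [u [r' [un Qu]]].
    exists (t * u), (r * u * q.2 + r' * t * p.2); split; first exact: nzdM.
    have -> : t * u * (fadd p q).1 - a * (r * u * q.2 + r' * t * p.2)
       = (u * q.2) * (t * p.1 - a * r) + (t * p.2) * (u * q.1 - a * r').
      by rewrite /=; ring.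
    by apply: (QD); apply: (QM).
  - move=> p q pv qv [t [r [tn Qt]]]; exists t, (p.1 * r); split => //.
    have -> : t * (fmul p q).1 - a * (p.1 * r) = p.1 * (t * q.1 - a * r).
      by rewrite /=; ring.
    exact: (QM).
have PJ : forall p, valid (@nzd R) p -> P p -> J p.
  move=> p _ Pp; exists 1, 0; split; first exact: nzd1.
  by rewrite mul1r mulr0 subr0.
have [[t [r [tn Qt]]]|JP] := Pmax J Jideal PJ.
- apply: (QS _ Qt); exists 0%N, r, t; split => //; rewrite expr0 /=; ring.
- have Ja : J (a, 1) by exists 1, 1; split; [exact: nzd1| rewrite /= mul1r mulr1 subrr].
  exact: (QS a (JP (a, 1) nzd1 Ja)).
Qed.


Definition GPPe := forall f : R, exists n, (1 <= n)%N /\ exists e : R,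
  [/\ e * e = e, e * f ^+ n = 0 & forall a, a * f ^+ n = 0 -> a * e = a].

Lemma GPPe_pireg : GPPe -> pireg.
Proof.
move=> H a; have [[|k] [//= _ [e [ee ea ann]]]] := H a.
exists k.+1, (a ^+ k), (a ^+ k.+1 + e); split.
- move=> x hx.
  have ex : e * x = 0.
    by have := congr1 (fun y => e * y) hx; rewrite mulr0 mulrA mulrDr ea add0r ee.
  have : x * a ^+ k.+1 = 0.
    by move: hx; rewrite mulrDl ex addr0 mulrC.
  by move/ann; rewrite mulrC ex => <-.
- rewrite mulrDl ea addr0 -!exprD; congr (_ ^+ _); rewrite addnS addSn.
  by rewrite addnC.
Qed.

Lemma GPPe_GPF : GPPe -> GPF_ring R.
Proof.
move=> H f; have [n [n1 [e [ee ef ann]]]] := H f; exists n; split => //.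
move=> r a x hx hsum.
pose cc i := sval (cid (hx i)).
have ccE i : x i = cc i * f ^+ n by rewrite /cc; case: (cid (hx i)).
exists 1%N, (fun _ => f ^+ n), (fun i _ => cc i * (1 - e)); split; last split.
- by move=> j; exists 1; rewrite mul1r.
- move=> i; rewrite big_ord1 ccE -mulrA mulrBl mul1r ef subr0 //.
- move=> j.
  have hs : (\sum_(i < r) a i * cc i) * f ^+ n = 0.
    rewrite -[RHS]hsum mulr_suml; apply: eq_bigr => i _; by rewrite ccE mulrA.
  have he := ann _ hs.
  transitivity ((\sum_(i < r) a i * cc i) * (1 - e)).
    by rewrite mulr_suml; apply: eq_bigr => i _; rewrite mulrA.
  by rewrite mulrBr mulr1 he subrr.
Qed.

Lemma sumpow (a b : R) n : a * b = 0 -> (a + b) ^+ n.+1 = a ^+ n.+1 + b ^+ n.+1.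
Proof.
move=> ab; elim: n => [|n IH]; first by rewrite !expr1.
rewrite exprS IH mulrDl !mulrDr -!exprS.
have -> : a * b ^+ n.+1 = 0 by rewrite exprS mulrA ab mul0r.
have -> : b * a ^+ n.+1 = 0 by rewrite exprS mulrA (mulrC b) ab mul0r.
by rewrite addr0 add0r.
Qed.

Lemma multX (S : R -> Prop) x n : mult_subset S -> S x -> S (x ^+ n).
Proof.
move=> [S1 SM] Sx; elim: n => [|n IH]; first by rewrite expr0.
by rewrite exprS; apply: SM.
Qed.

Lemma GPPe_lift (S : R -> Prop) : GPPe -> mult_subset S -> idem_lift S.
Proof.
move=> H hS [r s] /= sv [u [Su hu]]; rewrite /= in sv hu.
pose a := u * s * r; pose b := u * s * (s - r).
have ab : a * b = 0.
  have -> : a * b = - (u * s) * (u * (r * r * s - r * (s * s))) by rewrite /a /b; ring.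
  by rewrite hu mulr0.
have [[|k] [//= _ [e [ee ea ann]]]] := H a.
have be : b ^+ k.+1 * e = b ^+ k.+1.
  apply: ann; by rewrite -exprMn (mulrC b) ab expr0n.
have hk : forall k, (u * s * r) ^+ k.+1 * s = (u * s * s) ^+ k.+1 * r.
  elim=> [|j IH]; first by rewrite !expr1; ring.
  rewrite exprS -mulrA IH.
  have hu' : u * (r * r * s) = u * (r * s * s).
    by apply/eqP; rewrite -subr_eq0 -mulrBr -(mulrA r s s) hu.
  have -> : u * s * r * ((u * s * s) ^+ j.+1 * r) = (u * s * s) ^+ j.+1 * (u * (r * r * s)) by ring.
  by rewrite hu' [in RHS]exprS; ring.
exists (1 - e); split.
  by rewrite mulrBl mul1r mulrBr mulr1 ee subrr subr0.
exists ((u * s * s) ^+ k.+1); split; first by apply: multX => //; case: hS => _ SM; apply: (SM) => //; apply: (SM).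
rewrite /fcan /=.
have hab : a + b = u * s * s by rewrite /a /b; ring.
have hv : (u * s * s) ^+ k.+1 * (1 - e) = a ^+ k.+1.
  rewrite -hab sumpow // mulrDl !mulrBr !mulr1 be (mulrC (a ^+ k.+1)) ea subr0 subrr addr0 //.
have -> : (u * s * s) ^+ k.+1 * ((1 - e) * s - r * 1) = (u * s * s) ^+ k.+1 * (1 - e) * s - (u * s * s) ^+ k.+1 * r by ring.
by rewrite hv -hk subrr.
Qed.


Lemma mult_nzd : mult_subset (@nzd R).
Proof. by split; [exact: nzd1 | move=> a b; exact: nzdM]. Qed.

Lemma piregS : pireg -> forall a : R, exists n c t, [/\ (1 <= n)%N, nzd t &
  forall k, (n <= k)%N -> t * a ^+ k = c * a ^+ k.+1].
Proof.
move=> H a; have [n [c [t [tn e]]]] := H a.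
exists n.+1, c, t; split => // k hk.
have hk' : (n <= k)%N := ltnW hk.
rewrite -(subnKC hk') [in RHS]exprS !exprD mulrA e exprS; ring.
Qed.

Lemma pow_tk (t c f : R) n N : (forall k, (n <= k)%N -> t * f ^+ k = c * f ^+ k.+1) ->
  (n <= N)%N -> forall j, t ^+ j * f ^+ N = c ^+ j * f ^+ (N + j).
Proof.
move=> ek hN; elim=> [|j IH]; first by rewrite !expr0 !mul1r addn0.
rewrite exprS -mulrA IH mulrCA ek; last by apply: leq_trans hN (leq_addr _ _).
by rewrite addnS [in RHS]exprS; ring.
Qed.

Lemma lift_GPPe : pireg -> idem_lift (@nzd R) -> GPPe.
Proof.
move=> H L f; have [n [c [t [n1 tn ek]]]] := piregS H f.
have tn' := pow_tk ek (leqnn n) n; rewrite exprD in tn'.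
have [|e [ee /locT /= hle]] := L (f ^+ n * c ^+ n, t ^+ n) (nzdX (n:=n) tn).
  apply/locT => /=.
  have -> : f ^+ n * c ^+ n * (f ^+ n * c ^+ n) * t ^+ n
      = c ^+ n * (c ^+ n * (f ^+ n * f ^+ n)) * t ^+ n by ring.
  by rewrite -tn'; ring.
rewrite mulr1 in hle.
exists n; split => //; exists (1 - e); split.
- by rewrite mulrBl mul1r mulrBr mulr1 ee subrr subr0.
- apply: (nzdX (n:=n) tn).
  have -> : t ^+ n * ((1 - e) * f ^+ n) = t ^+ n * f ^+ n - e * t ^+ n * f ^+ n by ring.
  by rewrite hle tn'; ring.
- move=> a af.
  suff ae : a * e = 0 by rewrite mulrBr mulr1 ae subr0.
  apply: (nzdX (n:=n) tn).
  have -> : t ^+ n * (a * e) = a * f ^+ n * c ^+ n by rewrite -mulrA -hle; ring.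
  by rewrite af !mul0r.
Qed.

Lemma GPF_GPPe : GPF_ring R -> pireg -> GPPe.
Proof.
move=> G H f; have [n [c [t [n1 tn ek]]]] := piregS H f.
have [m [m1 fl]] := G (f ^+ n).
pose N := (n * m)%N.
have hN : (n <= N)%N by rewrite /N leq_pmulr.
have fN : (f ^+ n) ^+ m = f ^+ N by rewrite -exprM.
have tN := pow_tk ek hN N; rewrite exprD in tN.
pose z := t ^+ N - f ^+ N * c ^+ N.
have zf : z * f ^+ N = 0 by rewrite /z mulrBl tN; ring.
have hI : forall i : 'I_1, princ_pow (f ^+ n) m ((fun _ => f ^+ N) i).
  by move=> i; exists 1; rewrite mul1r fN.
have hS : \sum_(i < 1) (fun _ => z) i * (fun _ => f ^+ N) i = 0 by rewrite big_ord1.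
have [s [y [b [hy [hx hb]]]]] := fl 1%N (fun _ => z) (fun _ => f ^+ N) hI hS.
pose d j := sval (cid (hy j)).
have dE j : y j = d j * f ^+ N by rewrite /d; case: (cid (hy j)) => x /= ->; rewrite fN.
pose g := \sum_(j < s) b ord0 j * d j.
have gf : g * f ^+ N = f ^+ N.
  rewrite [RHS](hx ord0) /g mulr_suml; apply: eq_bigr => j _; by rewrite dE mulrA.
have zg : z * g = 0.
  rewrite /g mulr_sumr big1 // => j _; rewrite mulrA.
  by have := hb j; rewrite big_ord1 => ->; rewrite mul0r.
have annl a : a * f ^+ N = 0 -> a * g = 0.
  move=> af; apply: (nzdX (n:=N) tn).
  have -> : t ^+ N * (a * g) = a * (z * g) + (a * f ^+ N) * c ^+ N * g by rewrite /z; ring.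
  by rewrite zg af mulr0 !mul0r addr0.
exists N; split; first by rewrite /N muln_gt0 n1 m1.
exists (1 - g); split.
- have h := annl (1 - g); rewrite mulrBl mul1r gf subrr in h.
  by rewrite mulrBr mulr1 h // subr0.
- by rewrite mulrBl mul1r gf subrr.
- by move=> a af; rewrite mulrBr mulr1 annl // subr0.
Qed.

End Alg.

Lemma GPP_iff (R : comPzRingType) : GPP_ring R <-> GPPe R.
Proof.
split.
- move=> H f; have [n [n1 pr]] := H f.
  have [e [ee [ec ann]]] := proj_ann pr.
  by exists n; split => //; exists e; split.
- move=> H f; have [n [n1 [e [ee ef ann]]]] := H f.
  by exists n; split => //; apply: (ann_proj ef ann).
Qed.

Theorem theorem3p3 (R : comPzRingType) :
  let T := @nzd R in
  (GPP_ring R <-> (GPF_ring R /\ loc_zero_dim T)) /\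
  (GPP_ring R <->
     (loc_zero_dim T /\ forall S : R -> Prop, mult_subset S -> idem_lift S)) /\
  (GPP_ring R <-> (loc_zero_dim T /\ idem_lift T)).
Proof.
move=> T; rewrite /T !GPP_iff.
split; [|split]; split.
- move=> H; split; [exact: GPPe_GPF | exact: pireg_zd (GPPe_pireg H)].
- by move=> [G Z]; apply: GPF_GPPe G (zd_pireg Z).
- move=> H; split; first exact: pireg_zd (GPPe_pireg H).
  by move=> S hS; apply: GPPe_lift.
- by move=> [Z L]; apply: lift_GPPe (zd_pireg Z) (L _ (@mult_nzd R)).
- move=> H; split; first exact: pireg_zd (GPPe_pireg H).
  exact: GPPe_lift H (@mult_nzd R).
- by move=> [Z L]; apply: lift_GPPe (zd_pireg Z) L.
Qed.
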